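(* Let $X$ be a locally compact Polish space and $\{B_i\}_{i\in\mathbb{N}}$ a sequence of experiments in $X$. Let $\mathcal{V}$ be a compact set of continuous functions $X\to\mathbb{R}$ in the topology of uniform convergence on compact sets, and let $\Phi(\mathcal{V})$ be the set of preferences $\succeq_u$ (defined by $x\succeq_u y$ iff $u(x)\ge u(y)$) for $u\in\mathcal{V}$. Suppose every $\succeq\in\Phi(\mathcal{V})$ is locally strict. Let $c$ be a choice sequence and, for each $k$, let $\succeq_k\in\Phi(\mathcal{V})$ weakly rationalize the restriction of $c$ to $\Sigma_k$. Then there is $\succeq^*\in\Phi(\mathcal{V})$ with $\succeq_k\to\succeq^*$ in the topology of closed convergence. Furthermore, if $\succeq'_k\in\Phi(\mathcal{V})$ also weakly rationalizes the restriction of $c$ to $\Sigma_k$ for each $k$, then $\succeq'_k\to\succeq^*$.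
   Context: A preference $\succeq$ is locally strict if for all $x\succeq y$ and every neighborhood $V$ of $(x,y)$ in $X\times X$ there is $(x',y')\in V$ with $x'\succ y'$. A sequence of experiments is a sequence $\{B_i\}$ of unordered pairs $B_i\subseteq X$ such that $B=\bigcup_iB_i$ is dense in $X$ and for all $x,y\in B$ there is $k$ with $B_k=\{x,y\}$; $\Sigma_k=\{B_1,\dots,B_k\}$. A choice sequence is a map $c$ assigning to each $B_i$ a nonempty subset $c(B_i)\subseteq B_i$. With $c_{\succeq}(A)=\{x\in A:x\succeq y\ \forall y\in A\}$, $\succeq$ weakly rationalizes $c$ on $\Sigma_k$ if $c(B_i)\subseteq c_{\succeq}(B_i)$ for all $B_i\in\Sigma_k$. Closed convergence on closed subsets of $X\times X$: $F^n\to F$ iff $F$ equals both the set of points every neighborhood of which meets $F^n$ for all large $n$, and the set of points every neighborhood of which meets $F^n$ for infinitely many $n$. *)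

(* Defs.v *)
From HB Require Import structures.
From mathcomp Require Import all_boot all_order all_algebra.
From mathcomp Require Import all_classical all_reals all_analysis.
Set Implicit Arguments. Unset Strict Implicit. Unset Printing Implicit Defensive.
Import Order.TTheory GRing.Theory Num.Theory.
Import numFieldNormedType.Exports.
Local Open Scope classical_set_scope.
Local Open Scope ring_scope.

Definition loc_compact (X : topologicalType) : Prop :=
  forall x : X, exists K : set X, nbhs x K /\ compact K.

Definition separable_space (X : topologicalType) : Prop :=
  exists D : set X, countable D /\ dense D.

Definition completely_metrizable (R : realType) (X : topologicalType) : Prop :=
  exists d : X -> X -> R,
    (forall x y, 0 <= d x y) /\
        (forall x y, d x y = 0 <-> x = y) /\
        (forall x y, d x y = d y x) /\
        (forall x y z, d x z <= d x y + d y z) /\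
        (forall A : set X, open A <->
            (forall x, A x -> exists e : R, 0 < e /\ [set y | d x y < e] `<=` A)) /\
        (forall u : nat -> X,
            (forall e : R, 0 < e -> exists N : nat, forall m n, (N <= m)%N -> (N <= n)%N ->
                 d (u m) (u n) < e) ->
            exists l : X, forall e : R, 0 < e -> exists N : nat, forall n, (N <= n)%N ->
                 d (u n) l < e).

Definition polish (R : realType) (X : topologicalType) : Prop :=
  separable_space X /\ completely_metrizable R X.

(** Preferences are relations, i.e. subsets of X x X ((x,y) in P means x >= y). *)
Definition strict_pref (X : Type) (P : set (X * X)) (x y : X) : Prop :=
  P (x, y) /\ ~ P (y, x).

Definition locally_strict (X : topologicalType) (P : set (X * X)) : Prop :=
  forall x y : X, P (x, y) ->
    forall V : set (X * X), nbhs (x, y) V ->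
      exists p : X * X, V p /\ strict_pref P p.1 p.2.

Definition pref_of (X : Type) (R : realType) (u : X -> R) : set (X * X) :=
  [set p | u p.2 <= u p.1].

(** The unordered pair B_i represented by an ordered pair. *)
Definition upair (X : Type) (b : X * X) : set X := [set b.1; b.2].

Definition experiments (X : topologicalType) (B : nat -> X * X) : Prop :=
  dense (\bigcup_i upair (B i)) /\
  forall x y : X, (\bigcup_i upair (B i)) x -> (\bigcup_i upair (B i)) y ->
    exists k : nat, upair (B k) = [set x; y].

Definition choice_seq (X : Type) (B : nat -> X * X) (c : set X -> set X) : Prop :=
  forall i, c (upair (B i)) !=set0 /\ c (upair (B i)) `<=` upair (B i).

Definition choice_of (X : Type) (P : set (X * X)) (A : set X) : set X :=
  [set x | A x /\ forall y, A y -> P (x, y)].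

(** P weakly rationalizes c on Sigma_k = {B_0, ..., B_k}. *)
Definition weakly_rationalizes (X : Type) (P : set (X * X)) (B : nat -> X * X)
    (c : set X -> set X) (k : nat) : Prop :=
  forall i, (i <= k)%N -> c (upair (B i)) `<=` choice_of P (upair (B i)).

Definition lim_inf_set (T : topologicalType) (F : nat -> set T) : set T :=
  [set p | forall V, nbhs p V -> exists N, forall n, (N <= n)%N -> F n `&` V !=set0].

Definition lim_sup_set (T : topologicalType) (F : nat -> set T) : set T :=
  [set p | forall V, nbhs p V -> forall N, exists2 n, (N <= n)%N & F n `&` V !=set0].

Definition closed_converges (T : topologicalType) (F : nat -> set T) (G : set T) : Prop :=
  G = lim_inf_set F /\ G = lim_sup_set F.

(* Main.v *)
From Pilot Require Import Defs.
From mathcomp Require Import all_boot all_order all_algebra.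
From mathcomp Require Import all_classical all_reals all_analysis.
From mathcomp Require Import lra.
Import Order.TTheory GRing.Theory Num.Theory.
Import numFieldNormedType.Exports.
Local Open Scope classical_set_scope.
Local Open Scope ring_scope.

Lemma absP (R : realType) (x y e : R) : `|x - y| < e -> x - e < y /\ y < x + e.
Proof. by rewrite ltr_norml => /andP[h1 h2]; split; lra. Qed.

Lemma nbhs_unif {R : realType} {X : topologicalType} {w : {family compact, X -> R}}
  {K : set X} {e : R} : compact K -> 0 < e ->
  nbhs w [set f : {family compact, X -> R} | forall z, K z -> `|w z - f z| < e].
Proof.
move=> cK e0.
have := @fam_nbhs X R compact K _ w (entourage_ball R^o (PosNum e0)) cK.
apply: filterS => f H z Kz; have := H z Kz.
by rewrite -ball_normE.
Qed.

Lemma ctsnb {R : realType} {X : topologicalType} {f : X -> R} (x : X) {e : R} :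
  continuous f -> 0 < e -> nbhs x [set y | `|f x - f y| < e].
Proof. by move=> cf e0; move/cvgrPdist_lt: (cf x) => /(_ e e0). Qed.

Lemma prodnb {X : topologicalType} {a b : X} {A B : set X} :
  nbhs a A -> nbhs b B -> nbhs (a, b) (A `*` B).
Proof. by move=> hA hB; exists (A, B). Qed.

Definition ratall {X : Type} {R : realType} (f : X -> R) (B : nat -> X * X)
  (c : set X -> set X) := forall k, weakly_rationalizes (pref_of f) B c k.

Lemma uniq_pref {R : realType} {X : topologicalType} {B : nat -> X * X}
  {c : set X -> set X} (hB : experiments B) (hc : choice_seq B c) {f g : X -> R} :
  continuous f -> continuous g -> locally_strict (pref_of f) ->
  ratall f B c -> ratall g B c -> pref_of f `<=` pref_of g.
Proof.
move=> cf cg lsf rf rg [a b]; rewrite /pref_of /= => fab.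
rewrite leNgt; apply/negP => gab.
have e0 : 0 < (g b - g a) / 2 by lra.
have [[x y] [[/= /absP xA /absP yB] [/= fyx nfxy]]] :=
  lsf a b fab _ (prodnb (ctsnb a cg e0) (ctsnb b cg e0)).
have {}fyx : f y < f x by rewrite ltNge; apply/negP.
have d1 : 0 < (f x - f y) / 2 by lra.
have d2 : 0 < (g y - g x) / 2 by lra.
have nx := @filterI _ _ (nbhs_filter x) _ _ (ctsnb x cf d1) (ctsnb x cg d2).
have ny := @filterI _ _ (nbhs_filter y) _ _ (ctsnb y cf d1) (ctsnb y cg d2).
move: nx; rewrite nbhsE => -[Ox [oOx Oxx] sOx].
move: ny; rewrite nbhsE => -[Oy [oOy Oyy] sOy].
have [z [/sOx [/absP zf /absP zg] Bz]] := hB.1 Ox (ex_intro _ x Oxx) oOx.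
have [z' [/sOy [/absP zf' /absP zg'] Bz']] := hB.1 Oy (ex_intro _ y Oyy) oOy.
have [k hk] := hB.2 z z' Bz Bz'.
have [w cw] := (hc k).1.
have [_ hf] := rf k k (leqnn k) w cw.
have [_ hg] := rg k k (leqnn k) w cw.
have := (hc k).2 w cw; rewrite hk => -[] wE.
  have wz : w = z := wE; subst w.
  have := hg z'; rewrite hk /pref_of /= => /(_ (or_intror erefl)); lra.
have wz : w = z' := wE; subst w.
have := hf z; rewrite hk /pref_of /= => /(_ (or_introl erefl)); lra.
Qed.

Lemma clus {R : realType} {X : topologicalType} {V : set {family compact, X -> R}}
  (hVcpt : compact V) {u' : nat -> {family compact, X -> R}}
  (hV : forall k, V (u' k)) {G : set_system nat} (FG : ProperFilter G) :
  exists2 w, V w & forall S U, G S -> nbhs w U -> exists2 n, S n & U (u' n).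
Proof.
have FV : (u' @ G) V.
  apply: (@filterS _ G _ setT); last exact: filterT.
  by move=> n _; exact: hV.
have [w [Vw cw]] := hVcpt (u' @ G) _ FV.
exists w => // S U GS nU.
have Fi : (u' @ G) (u' @` S).
  by apply: (@filterS _ G _ S) => // n Sn; exists n.
have [f [[n Sn <-] Uf]] := cw _ _ Fi nU.
by exists n.
Qed.

Lemma clus_rat {R : realType} {X : topologicalType} {B : nat -> X * X}
  {c : set X -> set X} (hc : choice_seq B c) {u' : nat -> {family compact, X -> R}}
  (hrat : forall k, weakly_rationalizes (pref_of (u' k : X -> R)) B c k)
  {G : set_system nat} {w : {family compact, X -> R}}
  (hw : forall S U, G S -> nbhs w U -> exists2 n, S n & U (u' n))
  (htail : forall N, G [set n | (N <= n)%N]) : ratall (w : X -> R) B c.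
Proof.
move=> k i ik x cx; split; first exact: (hc i).2.
move=> y Hy; rewrite /pref_of /= leNgt; apply/negP => hxy.
have e0 : 0 < (w y - w x) / 2 by lra.
have cK : compact [set x; y] by apply: compactU; exact: compact_set1.
have [n /= iN Un] := hw _ _ (htail i) (nbhs_unif cK e0).
have [_ /(_ y Hy)] := hrat n i iN x cx.
rewrite /pref_of /=.
have /absP := Un x (or_introl erefl).
have /absP := Un y (or_intror erefl).
lra.
Qed.

Lemma conv {R : realType} {X : topologicalType} (hlc : loc_compact X)
  {B : nat -> X * X} (hB : experiments B)
  {V : set {family compact, X -> R}}
  (hVcont : forall u, V u -> continuous (u : X -> R))
  (hVcpt : compact V)
  (hVls : forall u, V u -> locally_strict (pref_of (u : X -> R)))
  {c : set X -> set X} (hc : choice_seq B c)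
  {us : {family compact, X -> R}} (Vus : V us) (rus : ratall (us : X -> R) B c)
  {u' : nat -> {family compact, X -> R}}
  (hu' : forall k, V (u' k) /\ weakly_rationalizes (pref_of (u' k : X -> R)) B c k) :
  closed_converges (fun k => pref_of (u' k : X -> R)) (pref_of (us : X -> R)).
Proof.
have hV k : V (u' k) by case: (hu' k).
have hrat k := (hu' k).2.
have same w : V w -> ratall (w : X -> R) B c -> pref_of (w : X -> R) = pref_of (us : X -> R).
  move=> Vw rw; rewrite eqEsubset; split; apply: (uniq_pref hB hc) => //; by [apply: hVcont|apply: hVls].
set P := fun k => pref_of (u' k : X -> R).
have LiLs : Pilot.Defs.lim_inf_set P `<=` Pilot.Defs.lim_sup_set P.
  move=> p hLi W nW N'; have [N hN] := hLi W nW.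
  by exists (maxn N N'); [exact: leq_maxr | apply: hN; exact: leq_maxl].
have pLi : pref_of (us : X -> R) `<=` Pilot.Defs.lim_inf_set P.
  move=> [a b] pab W nW; apply: contrapT => nE.
  have H N : exists2 n, (N <= n)%N & ~ (P n `&` W !=set0).
    apply: contrapT => h; apply: nE; exists N => n Nn; apply: contrapT => h2.
    by apply: h; exists n.
  pose G := filter_from setT (fun N => [set n | (N <= n)%N /\ ~ (P n `&` W !=set0)]).
  have FG : ProperFilter G.
    apply: filter_from_proper; last first.
      by move=> N _; have [n Nn hn] := H N; exists n.
    apply: filter_fromT_filter; first by exists 0%N.
    move=> i j; exists (maxn i j) => n /= [hn1 hn2]; split; split => //.
      exact: leq_trans (leq_maxl i j) hn1.
    exact: leq_trans (leq_maxr i j) hn1.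
  have [w Vw hw] := clus hVcpt hV FG.
  have rw : ratall (w : X -> R) B c.
    apply: (clus_rat hc hrat hw) => N; exists N => // n [] //.
  have pw := same w Vw rw.
  have [[x y] [Wxy [_ nyx]]] := hVls us Vus a b pab W nW.
  have wyx : w y < w x.
    rewrite ltNge; apply/negP => h; apply: nyx; rewrite -pw; exact: h.
  have e0 : 0 < (w x - w y) / 2 by lra.
  have cK : compact [set x; y] by apply: compactU; exact: compact_set1.
  have Gb : G [set n | (0 <= n)%N /\ ~ (P n `&` W !=set0)] by exists 0%N.
  have [n [_ hn] Un] := hw _ _ Gb (nbhs_unif cK e0).
  apply: hn; exists (x, y); split => //; rewrite /P /pref_of /=.
  have /absP := Un x (or_introl erefl).
  have /absP := Un y (or_intror erefl).
  lra.
have Lsp : Pilot.Defs.lim_sup_set P `<=` pref_of (us : X -> R).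
  move=> [a b] hLs; rewrite /pref_of /= leNgt; apply/negP => hab.
  pose G := filter_from [set NW : nat * set (X * X) | nbhs (a, b) NW.2]
     (fun NW => [set n | (NW.1 <= n)%N /\ P n `&` NW.2 !=set0]).
  have FG : ProperFilter G.
    apply: filter_from_proper; last first.
      move=> [N W] /= nW; have [n Nn hn] := hLs W nW N; by exists n.
    apply: filter_from_filter; first by exists (0%N, setT); exact: filterT.
    move=> [i Wi] [j Wj] /= nWi nWj; exists (maxn i j, Wi `&` Wj).
      exact: filterI.
    move=> n /= [hn [q [Pq [Wiq Wjq]]]]; split; split.
    - exact: leq_trans (leq_maxl i j) hn.
    - by exists q.
    - exact: leq_trans (leq_maxr i j) hn.
    - by exists q.
  have [w Vw hw] := clus hVcpt hV FG.
  have rw : ratall (w : X -> R) B c.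
    apply: (clus_rat hc hrat hw) => N; exists (N, setT) => //=.
      exact: filterT.
    by move=> n [].
  have pw := same w Vw rw.
  have wab : w a < w b.
    rewrite ltNge; apply/negP => h.
    have : pref_of (w : X -> R) (a, b) by rewrite /pref_of /=.
    by rewrite pw /pref_of /= => h2; move: hab; rewrite ltNge h2.
  have e0 : 0 < (w b - w a) / 4 by lra.
  have [Ka [nKa cKa]] := hlc a.
  have [Kb [nKb cKb]] := hlc b.
  have cw := hVcont w Vw.
  have nWa := @filterI _ _ (nbhs_filter a) _ _ nKa (ctsnb a cw e0).
  have nWb := @filterI _ _ (nbhs_filter b) _ _ nKb (ctsnb b cw e0).
  have Gb : G [set n | (0 <= n)%N /\ P n `&`
     ((Ka `&` [set y | `|w a - w y| < (w b - w a) / 4]) `*`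
      (Kb `&` [set y | `|w b - w y| < (w b - w a) / 4])) !=set0].
    by exists (0%N, (Ka `&` [set y | `|w a - w y| < (w b - w a) / 4]) `*`
      (Kb `&` [set y | `|w b - w y| < (w b - w a) / 4])) => //; exact: prodnb nWa nWb.
  have [n [_ [[x y] [Pxy [[Kax /absP ax] [Kby /absP bY]]]]] Un] :=
    hw _ _ Gb (nbhs_unif (compactU cKa cKb) e0).
  move: Pxy; rewrite /P /pref_of /=.
  have /absP := Un x (or_introl Kax).
  have /absP := Un y (or_intror Kby).
  lra.
split; rewrite eqEsubset; split => //.
- by move=> p /LiLs /Lsp.
- by move=> p /pLi /LiLs.
Qed.

Theorem theorem11 (R : realType) (X : topologicalType)
  (hpol : polish R X) (hlc : loc_compact X)
  (B : nat -> X * X) (hB : experiments B)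
  (V : set {family compact, X -> R})
  (hVcont : forall u, V u -> continuous (u : X -> R))
  (hVcpt : compact V)
  (hVls : forall u, V u -> locally_strict (pref_of (u : X -> R)))
  (c : set X -> set X) (hc : choice_seq B c)
  (u : nat -> {family compact, X -> R})
  (hu : forall k, V (u k) /\ weakly_rationalizes (pref_of (u k : X -> R)) B c k) :
  exists2 ustar : {family compact, X -> R}, V ustar &
    closed_converges (fun k => pref_of (u k : X -> R)) (pref_of (ustar : X -> R)) /\
    (forall u' : nat -> {family compact, X -> R},
       (forall k, V (u' k) /\ weakly_rationalizes (pref_of (u' k : X -> R)) B c k) ->
       closed_converges (fun k => pref_of (u' k : X -> R)) (pref_of (ustar : X -> R))).
Proof.
have hV k : V (u k) by case: (hu k).
have hrat k := (hu k).2.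
have [w Vw hw] := clus hVcpt hV (@eventually_filter).
have rw : ratall (w : X -> R) B c.
  by apply: (clus_rat hc hrat hw) => N; exists N.
exists w => //; split; first exact: (conv hlc hB hVcont hVcpt hVls hc Vw rw hu).
move=> u' hu'; exact: (conv hlc hB hVcont hVcpt hVls hc Vw rw hu').
Qed.
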